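(* Let $0<f_1<f_2<f_3$ and $2h=1$. For values $(f_L,g_L)$ with $f_L<1$ in the image of the reduced Lamé momentum map $(F_L,G_L):M_h\to\mathbb R^2$, set $r_2=g_L/(1-f_L)$ and define $$p_1(s)^2=\frac{f_L-s}{4(s-1)^2s},\qquad p_k(s)^2=-\frac{(f_L-1)s+g_L}{4(f_3-s)(s-f_1)(s-f_2)}\ (k=2,3),$$ $$J_1=\frac2\pi\int_0^{f_L}p_1\,ds,\quad J_2=\frac2\pi\int_{f_1}^{\min(r_2,f_2)}p_2\,ds,\quad J_3=\frac2\pi\int_{\max(f_2,r_2)}^{f_3}p_3\,ds.$$ Then for each fixed $r_2$, the points of the image of the momentum map lying on the straight line $F_L=1-\frac{1}{r_2}G_L$ are mapped by $(J_1,J_2,J_3)$ into a straight line in action space $\mathbb R^3$.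
   Context: $\mathbf L=(\ell_{12},\ell_{13},\ell_{14},\ell_{23},\ell_{24},\ell_{34})\in\mathbb R^6$; $M_h=\{\mathbf L:\sum_{i<j}\ell_{ij}^2=2h,\ \ell_{12}\ell_{34}-\ell_{13}\ell_{24}+\ell_{14}\ell_{23}=0\}\cong S^2\times S^2$ is a symplectic leaf of $\mathfrak{so}(4)^*$ (Lie–Poisson bracket). The reduced Lamé system is $F_L=\ell_{12}^2+\ell_{13}^2+\ell_{14}^2$, $G_L=f_1\ell_{34}^2+f_2\ell_{24}^2+f_3\ell_{23}^2$. The $J_i$ are its (continuous) action variables, obtained from separation of the geodesic flow on $S^3$ in Lamé coordinates; the radicands are nonnegative on the integration intervals. *)

(* Defs.v *)
From mathcomp Require Import all_boot all_order all_algebra.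
From mathcomp Require Import all_classical all_reals all_analysis.
Set Implicit Arguments. Unset Strict Implicit. Unset Printing Implicit Defensive.
Import Order.TTheory GRing.Theory Num.Theory.
Import numFieldNormedType.Exports.
Local Open Scope classical_set_scope.
Local Open Scope ring_scope.

Section Lame.
Variable R : realType.

(* The symplectic leaf M_h of so(4)^*, coordinates (l12,l13,l14,l23,l24,l34). *)
Definition in_Mh (h l12 l13 l14 l23 l24 l34 : R) : Prop :=
  l12 ^+ 2 + l13 ^+ 2 + l14 ^+ 2 + l23 ^+ 2 + l24 ^+ 2 + l34 ^+ 2 = 2 * h /\
  l12 * l34 - l13 * l24 + l14 * l23 = 0.

Definition F_L (l12 l13 l14 : R) : R := l12 ^+ 2 + l13 ^+ 2 + l14 ^+ 2.
Definition G_L (f1 f2 f3 l23 l24 l34 : R) : R :=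
  f1 * l34 ^+ 2 + f2 * l24 ^+ 2 + f3 * l23 ^+ 2.

Definition in_momentum_image (h f1 f2 f3 fL gL : R) : Prop :=
  exists l12 l13 l14 l23 l24 l34 : R,
    in_Mh h l12 l13 l14 l23 l24 l34 /\
    F_L l12 l13 l14 = fL /\ G_L f1 f2 f3 l23 l24 l34 = gL.

Definition r2_of (fL gL : R) : R := gL / (1 - fL).

Definition p1 (fL s : R) : R :=
  Num.sqrt ((fL - s) / (4 * (s - 1) ^+ 2 * s)).

Definition p23 (f1 f2 f3 fL gL s : R) : R :=
  Num.sqrt (- ((fL - 1) * s + gL) / (4 * (f3 - s) * (s - f1) * (s - f2))).

(* Action variables; integrals are Lebesgue integrals over the closed
   intervals (possibly improper as Riemann integrals: integrable singularities
   at the endpoints). *)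
Definition J1 (fL : R) : R :=
  2 / pi * Rintegral (@lebesgue_measure R) `[0, fL] (p1 fL).

Definition J2 (f1 f2 f3 fL gL : R) : R :=
  2 / pi * Rintegral (@lebesgue_measure R)
    `[f1, Num.min (r2_of fL gL) f2] (p23 f1 f2 f3 fL gL).

Definition J3 (f1 f2 f3 fL gL : R) : R :=
  2 / pi * Rintegral (@lebesgue_measure R)
    `[Num.max f2 (r2_of fL gL), f3] (p23 f1 f2 f3 fL gL).

End Lame.

(* Main.v *)
Require Import Defs.
From mathcomp Require Import all_boot all_order all_algebra.
From mathcomp Require Import all_classical all_reals all_analysis.
From mathcomp Require Import measurable_realfun lebesgue_integral ftc trigo realfun derive.
From mathcomp Require Import ring lra.
Import Order.TTheory GRing.Theory Num.Theory.
Import numFieldNormedType.Exports.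
Local Open Scope classical_set_scope.
Local Open Scope ring_scope.
Lemma minv (R : realType) : measurable_fun setT (fun x : R => x^-1).
Proof.
have -> : [set: R] = [set 0] `|` ~` [set 0] by rewrite setUv.
apply/measurable_funU; [exact: measurable_set1| |].
  by apply: measurableC; exact: measurable_set1.
split; first exact: measurable_fun_set1.
apply: open_continuous_measurable_fun.
  apply: closed_openC; apply: accessible_closed_set1.
  exact: hausdorff_accessible.
by move=> x; rewrite inE /= => /eqP x0; exact: inv_continuous.
Qed.

Lemma msqrt (R : realType) : measurable_fun setT (@Num.sqrt R).
Proof. exact: continuous_measurable_fun (@sqrt_continuous R). Qed.

Section A.
Variable R : realType.
Variables a : R.
Hypothesis a1 : a < 1.
Let b := Num.sqrt (1 - a).
Definition uu (y : R) := Num.sqrt (a / y - 1).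
Definition FF (t : R) := - atan t + b * atan (b^-1 * t).
Definition KK (y : R) := - atan (uu y) + b * atan (b^-1 * uu y).

Lemma cont_FF t : {for t, continuous FF}.
Proof.
apply: continuousD.
  apply: continuousN; exact: continuous_atan.
apply: continuousM; first exact: cst_continuous.
apply: continuous_comp; last exact: continuous_atan.
apply: continuousM; first exact: cst_continuous.
exact: cvg_id.
Qed.

Lemma cont_uu s : s != 0 -> {for s, continuous uu}.
Proof.
move=> s0; apply: continuous_comp; last exact: sqrt_continuous.
apply/differentiable_continuous/derivable1_diffP.
apply: derivableB => //.
apply: derivableM => //.
exact: derivableV.
Qed.

Lemma cont_KK s : s != 0 -> {for s, continuous KK}.
Proof.
move=> s0; have h := continuous_comp (@cont_uu s s0) (cont_FF (uu s)).
exact: h.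
Qed.

Lemma cont_p1 s : s != 0 -> s != 1 -> {for s, continuous (p1 a)}.
Proof.
move=> s0 s1; apply: continuous_comp; last exact: sqrt_continuous.
apply/differentiable_continuous/derivable1_diffP.
apply: derivableM.
  by apply: derivableB.
apply: derivableV.
  by rewrite !mulf_eq0 !negb_or subr_eq0 s0 s1 pnatr_eq0.
by apply: derivableM.
Qed.
Lemma dw (s : R) : s != 0 -> is_derive s 1 (fun y => a / y - 1) (- a / s ^+ 2).
Proof.
move=> s0.
have h1 : is_derive s 1 (fun y : R => y^-1) (- s ^- 2 *: 1).
  by apply: is_deriveV.
have h2 := is_deriveZ a h1.
have h3 := is_deriveB h2 (@is_derive_cst R R R 1 s 1).
have h4 : is_derive s 1 (fun y => a / y - 1) (a *: (- s ^- 2 *: 1) - 0) := h3.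
refine (is_derive_eq h4 _).
change (a * (- s ^- 2 * 1) - 0 = - a / s ^+ 2).
by rewrite subr0 mulr1 mulrN mulNr.
Qed.

Lemma bpos : 0 < b.
Proof. by rewrite sqrtr_gt0 subr_gt0. Qed.

Lemma dK (s : R) : 0 < s < a -> is_derive s 1 KK (p1 a s).
Proof.
case/andP=> s0 sa.
have s0' : s != 0 by rewrite gt_eqF.
have wpos : 0 < a / s - 1 by rewrite subr_gt0 ltr_pdivlMr // mul1r.
have hu := @is_derive1_comp R Num.sqrt (fun y => a / y - 1) s _ _ (is_derive1_sqrt wpos) (@dw s s0').
have hu' : is_derive s 1 uu ((2 * Num.sqrt (a / s - 1))^-1 * (- a / s ^+ 2)) := hu.
have h1 := @is_derive1_comp R atan uu s _ _ (is_derive1_atan (uu s)) hu'.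
have h2 := is_deriveZ b^-1 hu'.
have h2' : is_derive s 1 (fun y => b^-1 * uu y) (b^-1 *: ((2 * Num.sqrt (a / s - 1))^-1 * (- a / s ^+ 2))) := h2.
have h3 := @is_derive1_comp R atan (fun y => b^-1 * uu y) s _ _ (is_derive1_atan (b^-1 * uu s)) h2'.
have h4 := is_deriveD (is_deriveN h1) (is_deriveZ b h3).
have h5 : is_derive s 1 KK (- ((1 + uu s ^+ 2)^-1 * ((2 * Num.sqrt (a / s - 1))^-1 * (- a / s ^+ 2))) + b *: ((1 + (b^-1 * uu s) ^+ 2)^-1 * (b^-1 *: ((2 * Num.sqrt (a / s - 1))^-1 * (- a / s ^+ 2))))) := h4.
refine (is_derive_eq h5 _).
set U := uu s.
have hU : U = Num.sqrt (a / s - 1) by [].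
have U0 : 0 < U by rewrite hU sqrtr_gt0.
have hU2 : U ^+ 2 = a / s - 1 by rewrite hU sqr_sqrtr // ltW.
have b0 := bpos.
have hb2 : b ^+ 2 = 1 - a by rewrite sqr_sqrtr // subr_ge0 ltW.
have s1 : 0 < 1 - s by rewrite subr_gt0 (lt_trans sa).
have s1n : 1 - s != 0 by rewrite gt_eqF.
have s1n' : s - 1 != 0 by rewrite -opprB oppr_eq0.
have U0' : U != 0 by rewrite gt_eqF.
have b0' : b != 0 by rewrite gt_eqF.
have hp : p1 a s = U ^+ 2 / (2 * U * (1 - s)).
  rewrite /p1 (_ : (a - s) / (4 * (s - 1) ^+ 2 * s) = U ^+ 2 * ((2 * (1 - s))^-1) ^+ 2).
    rewrite sqrtrM ?sqr_ge0 // !sqrtr_sqr !ger0_norm ?invr_ge0 ?mulr_ge0 ?ltW //.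
    by field; rewrite (gt_eqF U0) (gt_eqF s1).
  by rewrite hU2; field; rewrite s1n s0' s1n'.
rewrite hp -hU.
change (- ((1 + U ^+ 2)^-1 * ((2 * U)^-1 * (- a / s ^+ 2))) + b * ((1 + (b^-1 * U) ^+ 2)^-1 * (b^-1 * ((2 * U)^-1 * (- a / s ^+ 2)))) = U ^+ 2 / (2 * U * (1 - s))).
rewrite exprMn exprVn hU2 hb2.
have a0 : a != 0 by rewrite gt_eqF // (lt_trans s0).
have a1n : 1 - a != 0 by rewrite subr_eq0 eq_sym lt_eqF.
have e1 : (1 - a) * s + (a + -1 * s) = a * (1 - s) by ring.
have e2 : s + (a + -1 * s) = a by ring.
by field; rewrite e1 e2 mulf_neq0 // s1n U0' s0' b0' a1n a0.
Qed.

Lemma KKa : a != 0 -> KK a = 0.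
Proof. by move=> a0; rewrite /KK /uu divff // subrr sqrtr0 mulr0 atan0 mulr0 oppr0 addr0. Qed.

Lemma ftc_piece e : 0 < e < a -> (\int[lebesgue_measure]_(x in `[e, a]) (p1 a x)%:E = (- KK e)%:E)%E.
Proof.
case/andP=> e0 ea.
have a0 : a != 0 by rewrite gt_eqF // (lt_trans e0).
rewrite (@continuous_FTC2 _ _ KK _ _ ea).
- by rewrite KKa // sub0e.
- apply: continuous_in_subspaceT => x; rewrite inE /= in_itv /= => /andP[ex xa].
  apply: cont_p1; first by rewrite gt_eqF // (lt_le_trans e0).
  by rewrite lt_eqF // (le_lt_trans xa).
- split.
  + move=> x; rewrite in_itv /= => /andP[ex xa].
    have := @dK x; rewrite (lt_trans e0 ex) xa => /(_ isT) h.
    exact: (@ex_derive _ _ _ _ _ _ _ h).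
  + apply: cvg_at_right_filter; apply: cont_KK; by rewrite gt_eqF.
  + by apply: cvg_at_left_filter; apply: cont_KK.
- move=> x; rewrite in_itv /= => /andP[ex xa].
  have := @dK x; rewrite (lt_trans e0 ex) xa => /(_ isT) h.
  by rewrite derive1E; exact: (@derive_val _ _ _ _ _ _ _ h).
Qed.

Lemma cvg_sqrt_pinfty (c : R) : 0 < c -> (c * Num.sqrt (n.+1%:R)) @[n --> \oo] --> +oo.
Proof.
move=> c0; apply/cvgryPge => M.
have := @cvgr_idn R; move/cvgryPge/(_ ((M / c) ^+ 2)).
apply: filterS => n hn.
have [M0|M0] := leP M 0.
  by rewrite (le_trans M0) // mulr_ge0 // ?ltW // sqrtr_ge0.
rewrite -ler_pdivrMl //.
rewrite mulrC.
apply: (le_trans (ler_norm _)).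
rewrite -sqrtr_sqr.
apply: ler_wsqrtr.
by rewrite (le_trans hn) // ler_nat.
Qed.

Lemma cvg_atan_sqrt (c : R) : 0 < c -> atan (c * Num.sqrt (n.+1%:R)) @[n --> \oo] --> pi / 2.
Proof.
move=> c0; have h := cvg_comp _ _ (@cvg_sqrt_pinfty c c0) (@cvgy_atan R).
exact: h.
Qed.

Lemma cvg_KK : 0 < a -> (- KK (a / n.+2%:R)) @[n --> \oo] --> pi / 2 * (1 - b).
Proof.
move=> a0.
have E : (fun n : nat => - KK (a / n.+2%:R)) = (fun n => atan (1 * Num.sqrt n.+1%:R) - b * atan (b^-1 * Num.sqrt n.+1%:R)).
  apply/funext => n; rewrite /KK /uu.
  have -> : a / (a / n.+2%:R) - 1 = n.+1%:R.
    rewrite -[n.+2]addn1 natrD.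
    field; rewrite (gt_eqF a0) andbT; apply: lt0r_neq0; have := ler0n R n; lra.
  by rewrite mul1r; ring.
rewrite E.
have -> : pi / 2 * (1 - b) = pi / 2 - b * (pi / 2) by ring.
apply: cvgB; first exact: (@cvg_atan_sqrt 1 ltr01).
apply: cvgM; first exact: cvg_cst.
by apply: cvg_atan_sqrt; rewrite invr_gt0; exact: bpos.
Qed.

Lemma mp1 : measurable_fun setT (p1 a).
Proof.
apply: measurableT_comp; first exact: msqrt.
apply: measurable_funM.
  by apply: measurable_funB.
apply: measurableT_comp; first exact: minv.
apply: measurable_funM => //.
apply: measurable_funM => //.
by apply: measurable_funX; apply: measurable_funB.
Qed.

Lemma int_p1 : 0 < a -> (\int[lebesgue_measure]_(x in `[0%R, a]) (p1 a x)%:E)%E = (pi / 2 * (1 - b))%:E.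
Proof.
move=> a0.
pose e (n : nat) := a / n.+2%:R.
have e0 n : 0 < e n by rewrite divr_gt0.
have ea n : e n < a by rewrite ltr_pdivrMr // ltr_pMr // ltr1n.
have ele n m : (n <= m)%N -> e m <= e n.
  by move=> nm; rewrite ler_pM2l // lef_pV2 ?posrE // ler_nat ltnS.
pose g n := (EFin \o p1 a) \_ `[e n, a].
pose D : set R := [set` `[0, a]].
have mD : measurable D by exact: measurable_itv.
have mg n : measurable_fun D (g n).
  apply/measurable_restrict => //.
  apply/measurable_EFinP.
  exact: (measurable_funS measurableT (@subsetT _ _) mp1).
have g0 n x : D x -> (0 <= g n x)%E.
  by move=> _; rewrite /g patchE; case: ifP => // _; rewrite lee_fin sqrtr_ge0.
have ndg x : D x -> {homo g ^~ x : n m / (n <= m)%N >-> (n <= m)%E}.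
  move=> _ n m nm; rewrite /g !patchE.
  case: ifPn => xn.
    have xm : x \in (`[e m, a]%classic : set R).
      move/set_mem: xn; rewrite /= !in_itv /= => /andP[h1 h2].
      apply/mem_set; rewrite /= in_itv /= h2 andbT.
      exact: le_trans (ele _ _ nm) h1.
    by rewrite xm.
  by case: ifP => // _; rewrite lee_fin sqrtr_ge0.
have sub n : `[e n, a] `<=` D.
  move=> x /=; rewrite !in_itv /= => /andP[h1 h2]; rewrite /D /= in_itv /= h2 andbT.
  exact: le_trans (ltW (e0 n)) h1.
have hint n : (\int[lebesgue_measure]_(x in D) g n x = (- KK (e n))%:E)%E.
  rewrite -integral_mkcondr setIidr //.
  by apply: ftc_piece; rewrite e0 ea.
have hlim x : D x -> limn (g ^~ x) = (p1 a x)%:E.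
  rewrite /D /= in_itv /= => /andP[x0 xa].
  case: (eqVneq x 0) => [->|xn0].
    have -> : p1 a 0 = 0 by rewrite /p1 mulr0 invr0 mulr0 sqrtr0.
    rewrite (_ : g ^~ 0 = fun=> 0%E); first exact: lim_cst.
    apply/funext => n; rewrite /g patchE memNset //= in_itv /= lt_geF //.
  have xp : 0 < x by rewrite lt_neqAle eq_sym xn0.
  apply: lim_near_cst => //.
  have := @cvgr_idn R; move/cvgryPge/(_ (a / x)).
  apply: filterS => n hn.
  rewrite /g patchE mem_set //= in_itv /= xa andbT.
  rewrite ler_pdivrMr //.
  move: hn; rewrite ler_pdivrMr // => hn.
  apply: (le_trans hn); rewrite mulrC ler_pM2l // ler_nat leqW // leqnSn.
have h := @cvg_monotone_convergence _ _ _ lebesgue_measure _ mD g mg g0 ndg.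
have E : (\int[lebesgue_measure]_(x in D) limn (g ^~ x) = \int[lebesgue_measure]_(x in D) (p1 a x)%:E)%E.
  by apply: eq_integral => x; rewrite inE => /hlim.
rewrite E in h.
have h2 : (\int[lebesgue_measure]_(x in `[0%R, a]) g n x)%E @[n --> \oo] --> (pi / 2 * (1 - b))%:E.
  rewrite (_ : (fun n => _) = (fun n => (- KK (e n))%:E)); last by apply/funext => n; rewrite hint.
  apply: cvg_EFin; first exact: nearW.
  exact: cvg_KK.
exact: (cvg_unique _ h h2).
Qed.
End A.

Lemma J1_val (R : realType) (a : R) : 0 <= a -> a < 1 -> J1 a = 1 - Num.sqrt (1 - a).
Proof.
move=> + a1; rewrite le_eqVlt => /predU1P[<-|a0].
  by rewrite /J1 set_itv1 Rintegral_set1 mulr0 subr0 sqrtr1 subrr.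
rewrite /J1 /Rintegral (@int_p1 R a a1 a0) /=.
have pi0 : (pi : R) != 0 by rewrite gt_eqF // pi_gt0.
by move: pi0; set p := (pi : R) => pi0; clearbody p; field.
Qed.

Definition qq (R : realType) (f1 f2 f3 r2 s : R) :=
  Num.sqrt ((s - r2) / (4 * (f3 - s) * (s - f1) * (s - f2))).
Arguments qq {R}.

Lemma mqq (R : realType) (f1 f2 f3 r2 : R) : measurable_fun setT (qq f1 f2 f3 r2).
Proof.
apply: measurableT_comp; first exact: msqrt.
apply: measurable_funM.
  by apply: measurable_funB.
apply: measurableT_comp; first exact: minv.
apply: measurable_funM; last by apply: measurable_funB.
apply: measurable_funM; last by apply: measurable_funB.
apply: measurable_funM => //.
by apply: measurable_funB.
Qed.

Lemma p23_eq (R : realType) (f1 f2 f3 fL gL r2 : R) : fL < 1 -> gL = r2 * (1 - fL) ->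
  p23 f1 f2 f3 fL gL = fun s => Num.sqrt (1 - fL) * qq f1 f2 f3 r2 s.
Proof.
move=> fL1 ->; apply/funext => s.
rewrite /p23 /qq -sqrtrM ?subr_ge0 ?ltW //; congr Num.sqrt.
by ring.
Qed.

Lemma RintZ (R : realType) (D : set R) (c : R) (f : R -> R) :
  measurable D -> measurable_fun setT f -> (forall x, 0 <= f x) -> 0 <= c ->
  Rintegral lebesgue_measure D (fun x => c * f x) = c * Rintegral lebesgue_measure D f.
Proof.
move=> mD mf f0 c0; rewrite /Rintegral.
under eq_integral do rewrite EFinM.
rewrite ge0_integralZl_EFin //; last 2 first.
- by move=> x _; rewrite lee_fin.
- apply/measurable_EFinP.
  exact: (measurable_funS measurableT (@subsetT _ _) mf).
case: (\int[lebesgue_measure]_(x in D) (f x)%:E)%E => [r| |] //=.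
- have [->|cp] := eqVneq c 0; first by rewrite mul0e mul0r.
  have cp' : 0 < c by rewrite lt_neqAle eq_sym cp c0.
  by rewrite mulry gtr0_sg // mul1e /= mulr0.
- have [->|cp] := eqVneq c 0; first by rewrite mul0e mul0r.
  have cp' : 0 < c by rewrite lt_neqAle eq_sym cp c0.
  by rewrite mulrNy gtr0_sg // mul1e /= mulr0.
Qed.

Theorem lemma14 (R : realType) (f1 f2 f3 h : R) :
  0 < f1 -> f1 < f2 -> f2 < f3 -> 2 * h = 1 ->
  forall r2 : R,
  exists (P1 P2 P3 D1 D2 D3 : R),
    (D1 != 0 \/ D2 != 0 \/ D3 != 0) /\
    forall fL gL : R,
      in_momentum_image h f1 f2 f3 fL gL -> fL < 1 ->
      r2_of fL gL = r2 ->
      fL = 1 - gL / r2 ->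
      exists t : R,
        J1 fL = P1 + t * D1 /\
        J2 f1 f2 f3 fL gL = P2 + t * D2 /\
        J3 f1 f2 f3 fL gL = P3 + t * D3.
Proof.
move=> hf1 hf12 hf23 hh r2.
exists 1, 0, 0, (-1),
  (2 / pi * Rintegral lebesgue_measure `[f1, Num.min r2 f2] (qq f1 f2 f3 r2)),
  (2 / pi * Rintegral lebesgue_measure `[Num.max f2 r2, f3] (qq f1 f2 f3 r2)); split.
  by left; rewrite oppr_eq0 oner_eq0.
move=> fL gL [l12 [l13 [l14 [l23 [l24 [l34 [_ [hF hG]]]]]]]] fL1 hr2 _.
have fL0 : 0 <= fL by rewrite -hF /F_L !addr_ge0 // sqr_ge0.
have gLe : gL = r2 * (1 - fL).
  by move: hr2; rewrite /r2_of => <-; rewrite divfK // subr_eq0 eq_sym lt_eqF.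
have q0 x : 0 <= qq f1 f2 f3 r2 x by exact: sqrtr_ge0.
exists (Num.sqrt (1 - fL)); split; [|split].
- by rewrite J1_val // mulrN1.
- rewrite /J2 hr2 (@p23_eq R f1 f2 f3 fL gL r2 fL1 gLe) RintZ ?sqrtr_ge0 //.
    by rewrite add0r mulrCA.
  exact: mqq.
- rewrite /J3 hr2 (@p23_eq R f1 f2 f3 fL gL r2 fL1 gLe) RintZ ?sqrtr_ge0 //.
    by rewrite add0r mulrCA.
  exact: mqq.
Qed.
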